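(* Let $k\ge1$, $G=(V,E)$ an inductively $k$-independent graph with $k$-independence ordering $v_1,\dots,v_n$, $f:2^V\to\mathbb{R}_{\ge0}$ monotone submodular with $f(\emptyset)=0$, and $\beta>0$. Let $S_{\mathrm{end}}$ and $w_1,\dots,w_n$ be as produced by Phase 1 of algorithm PD-MON (described in the context), and let $\mathrm{OPT}=\max\{f(T):T\text{ independent in }G\}$. Then \[ \mathrm{OPT}\le f(S_{\mathrm{end}})+k(1+\beta)\sum_{i=1}^n w_i. \]
   Context: $N(v)$ is the neighbourhood of $v$ (excluding $v$); $G$ is inductively $k$-independent with $k$-independence ordering $v_1,\dots,v_n$ if for every $i$, $G[N(v_i)\cap\{v_i,\dots,v_n\}]$ has no independent set of size more than $k$. For $S\subseteq V$, $f_S(v)=f(S\cup\{v\})-f(S)$. Phase 1 of algorithm PD-MON (parameter $\beta>0$): start with $S=\emptyset$ and $w_1=\dots=w_n=0$. For $i=1,\dots,n$: let $C_i=N(v_i)\cap S$ for the current $S$; if $f_S(v_i)>(1+\beta)\sum_{v_j\in C_i}w_j$, set $w_i=f_S(v_i)-\sum_{v_j\in C_i}w_j$ (with $S$ the set before insertion) and add $v_i$ to $S$; otherwise leave $w_i=0$. $S_{\mathrm{end}}$ is $S$ at the end of this phase. *)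

(* Defs.v *)
(* Vertices v_1..v_n are the ordinals 'I_n, in their natural order. *)
From HB Require Import structures.
From mathcomp Require Import all_boot all_order all_algebra.
Set Implicit Arguments. Unset Strict Implicit. Unset Printing Implicit Defensive.
Import Order.TTheory GRing.Theory Num.Theory.
Local Open Scope ring_scope.

Definition simple_graph (n : nat) (e : rel 'I_n) : Prop :=
  (forall u, ~~ e u u) /\ (forall u v, e u v = e v u).

Definition independent (n : nat) (e : rel 'I_n) (T : {set 'I_n}) : bool :=
  [forall u in T, forall v in T, ~~ e u v].

Definition later_nbhd (n : nat) (e : rel 'I_n) (i : 'I_n) : {set 'I_n} :=
  [set j | e i j & (i <= j)%N].

(* the natural order v_1,...,v_n is a k-independence ordering *)
Definition inductively_k_independent (n k : nat) (e : rel 'I_n) : Prop :=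
  forall i : 'I_n, forall A : {set 'I_n},
    A \subset later_nbhd e i -> independent e A -> (#|A| <= k)%N.

Definition monotone_set_fun (R : realFieldType) (n : nat) (f : {set 'I_n} -> R) : Prop :=
  forall A B : {set 'I_n}, A \subset B -> f A <= f B.

Definition submodular (R : realFieldType) (n : nat) (f : {set 'I_n} -> R) : Prop :=
  forall A B : {set 'I_n}, f (A :|: B) + f (A :&: B) <= f A + f B.

Definition pdmon_step (R : realFieldType) (n : nat) (e : rel 'I_n)
  (f : {set 'I_n} -> R) (beta : R)
  (st : {set 'I_n} * {ffun 'I_n -> R}) (v : 'I_n) : {set 'I_n} * {ffun 'I_n -> R} :=
  let S := st.1 in let w := st.2 in
  let C := [set u in S | e v u] in
  let marg := f (v |: S) - f S in
  let sC := \sum_(u in C) w u in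
  if (1 + beta) * sC < marg
  then (v |: S, [ffun u => if u == v then marg - sC else w u])
  else (S, w).

Definition pdmon_phase1 (R : realFieldType) (n : nat) (e : rel 'I_n)
  (f : {set 'I_n} -> R) (beta : R) : {set 'I_n} * {ffun 'I_n -> R} :=
  foldl (pdmon_step e f beta) (set0, [ffun => 0]) (enum 'I_n).

(* Main.v *)
Require Import Defs.
From HB Require Import structures.
From mathcomp Require Import all_boot all_order all_algebra.
From mathcomp Require Import lra.
Import Order.TTheory GRing.Theory Num.Theory.
Local Open Scope ring_scope.

Section Aux.
Variables (R : realFieldType) (n : nat) (e : rel 'I_n) (f : {set 'I_n} -> R) (beta : R).
Hypothesis mono : monotone_set_fun f.
Hypothesis subm : submodular f.
Hypothesis bpos : 0 < beta.

Lemma dr (v : 'I_n) {A B : {set 'I_n}} : A \subset B ->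
  f (v |: B) - f B <= f (v |: A) - f A.
Proof.
move=> AB; have := subm (v |: A) B.
have -> : (v |: A) :|: B = v |: B by rewrite -setUA (setUidPr AB).
have : f A <= f ((v |: A) :&: B).
  by apply: mono; rewrite subsetI subsetUr AB.
lra.
Qed.

Lemma subadd (A : {set 'I_n}) (s : seq 'I_n) :
  f (A :|: [set x in s]) <= f A + \sum_(v <- s) (f (v |: A) - f A).
Proof.
elim: s => [|a s IH].
  have -> : [set x in [::]] = set0 :> {set 'I_n} by apply/setP=> x; rewrite !inE.
  by rewrite setU0 big_nil addr0.
have -> : [set x in a :: s] = a |: [set x in s] by apply/setP=> x; rewrite !inE.
rewrite setUCA big_cons.
have := dr a (subsetUl A [set x in s]); lra.
Qed.

Definition st m := foldl (pdmon_step e f beta) (set0, [ffun => 0]) (take m (enum 'I_n)).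

Definition Inv (m : nat) (p : {set 'I_n} * {ffun 'I_n -> R}) : Prop :=
  (forall u, 0 <= p.2 u) /\ (forall u, u \in p.1 -> (u < m)%N) /\
  (forall v : 'I_n, (v < m)%N -> v \notin p.1 ->
     f (v |: p.1) - f p.1 <= (1 + beta) * \sum_(u in p.1 | e v u && (u < v)%N) p.2 u).

Lemma inv0 : Inv 0 (st 0).
Proof.
rewrite /st take0 /=; split; first by move=> u; rewrite ffunE.
by split=> [u|v]; rewrite ?inE.
Qed.

Lemma inv_step m (Hm : (m < n)%N) : Inv m (st m) -> Inv m.+1 (st m.+1).
Proof.
have Ht : take m.+1 (enum 'I_n) = rcons (take m (enum 'I_n)) (Ordinal Hm).
  rewrite (take_nth (Ordinal Hm)) ?size_enum_ord //; congr rcons.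
  by apply: val_inj; rewrite /= nth_enum_ord.
rewrite /st Ht foldl_rcons -/(st m).
case: (st m) => S w [wge0 [Slt Hinv]] /=.
rewrite /pdmon_step /=.
set v' := Ordinal Hm.
set sC := \sum_(u in [set u in S | e v' u]) w u.
have sCge0 : 0 <= sC by apply: sumr_ge0 => u _.
case: ifP => Hlt; (split; [|split]) => /=.
- move=> u; rewrite ffunE; case: (u == v') => //.
  have : 0 <= beta * sC by apply: mulr_ge0 => //; apply: ltW.
  move: Hlt; rewrite mulrDl mul1r; lra.
- move=> u; rewrite in_setU1 => /orP [/eqP -> //|/Slt]; exact: ltnW.
- move=> v vlt; rewrite in_setU1 negb_or => /andP [vv' vS].
  have vm : (v < m)%N.
    rewrite ltnS leq_eqVlt in vlt; case/orP: vlt => // /eqP vm.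
    have vv : v = v' by apply: val_inj; rewrite /= vm.
    by rewrite vv eqxx in vv'.
  apply: le_trans (dr v (subsetUr [set v'] S)) _.
  apply: le_trans (Hinv v vm vS) _.
  rewrite le_eqVlt; apply/orP; left; apply/eqP; congr (_ * _).
  apply: eq_big => u.
    rewrite in_setU1; case: (eqVneq u v') => [->|] /=.
      have -> : (m < v)%N = false by rewrite ltnNge ltnW.
      by rewrite !andbF.
    by [].
  move=> /and3P [_ _ uv]; rewrite /= ffunE; case: (eqVneq u v') => [ueq|//].
  by move: uv; rewrite ueq /= ltnNge ltnW.
- exact: wge0.
- move=> u /Slt; exact: ltnW.
- move=> v vlt vS; rewrite ltnS leq_eqVlt in vlt; case/orP: vlt => [/eqP vm|vm].
    have -> : v = v' by apply: val_inj; rewrite /= vm.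
    move: Hlt; rewrite -/sC => /negbT; rewrite -leNgt => H.
    apply: le_trans H _; rewrite le_eqVlt; apply/orP; left; apply/eqP.
    congr (_ * _); apply: eq_bigl => u; rewrite inE.
    case uS: (u \in S) => //=; rewrite [X in _ && X](Slt u uS) andbT //.
  exact: Hinv.
Qed.

Lemma inv_all m : (m <= n)%N -> Inv m (st m).
Proof.
elim: m => [|m IH] Hm; first exact: inv0.
exact: inv_step (IH (ltnW Hm)).
Qed.

End Aux.

Lemma indep_sub n (e : rel 'I_n) (A T : {set 'I_n}) :
  A \subset T -> independent e T -> independent e A.
Proof.
move=> sub /forallP H; apply/forallP => x; apply/implyP => xA.
have /implyP H1 := H x; have /forallP H2 := H1 (subsetP sub x xA).
apply/forallP => y; apply/implyP => yA.
exact: (implyP (H2 y)) (subsetP sub y yA).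
Qed.

Theorem corollary1 (R : realFieldType) (n k : nat) (e : rel 'I_n)
  (f : {set 'I_n} -> R) (beta : R) :
  (1 <= k)%N ->
  simple_graph e ->
  inductively_k_independent k e ->
  (forall A, 0 <= f A) -> monotone_set_fun f -> submodular f -> f set0 = 0 ->
  0 < beta ->
  forall T : {set 'I_n}, independent e T ->
    f T <= f (pdmon_phase1 e f beta).1
           + k%:R * (1 + beta) * \sum_(i < n) (pdmon_phase1 e f beta).2 i.
Proof.
move=> k1 [eirr esym] kind fge0 mono subm f0 bpos T Tind.
have -> : pdmon_phase1 e f beta = st R n e f beta n.
  by rewrite /st take_oversize ?size_enum_ord.
have := @inv_all R n e f beta mono subm bpos n (leqnn n).
case: (st R n e f beta n) => S w [wge0 [_ Hinv]] /=.
have b1 : 0 <= 1 + beta by lra.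
pose P v u := e v u && (u < v)%N.
have step1 : f T <= f S + \sum_(v in T) (f (v |: S) - f S).
  apply: le_trans (mono _ _ (subsetUr S T)) _.
  rewrite -{1}(set_enum T) -big_enum; exact: subadd.
have step2 : \sum_(v in T) (f (v |: S) - f S) <=
             (1 + beta) * \sum_(v in T) \sum_u (if P v u then w u else 0).
  rewrite mulr_sumr; apply: ler_sum => v _.
  case vS: (v \in S).
    rewrite (setUidPr _) ?sub1set // subrr; apply: mulr_ge0 => //.
    by apply: sumr_ge0 => u _; case: ifP.
  apply: le_trans (Hinv v (ltn_ord v) (negbT vS)) _.
  apply: ler_wpM2l => //; rewrite big_mkcond /=; apply: ler_sum => u _.
  rewrite /P; case: (u \in S) => //=; case: ifP => //.
have step3 : \sum_(v in T) \sum_u (if P v u then w u else 0) <=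
             k%:R * \sum_(i < n) w i.
  rewrite exchange_big /= mulr_sumr; apply: ler_sum => u _.
  rewrite -big_mkcondr /=.
  have -> : \sum_(v in T | P v u) w u = \sum_(v in [set v in T | P v u]) w u.
    by apply: eq_bigl => v; rewrite inE.
  rewrite sumr_const -[w u *+ _]mulr_natr [k%:R * _]mulrC; apply: ler_wpM2l => //.
  rewrite ler_nat; apply: (kind u).
    apply/subsetP => v; rewrite !inE /P => /andP [_ /andP [euv uv]].
    by rewrite esym euv ltnW.
  apply: indep_sub Tind; apply/subsetP => v; rewrite inE => /andP [] //.
have := ler_wpM2l b1 step3.
rewrite mulrA [(1 + beta) * _]mulrC.
move: step1 step2; lra.
Qed.
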